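(* Let $p_1,p_2,p_3$ be distinct primes and $n_1,n_2,n_3$ be positive integers. Then $$\sum_{i=1}^3\frac{p_i^{n_i+1}-p_i}{p_i-1}\leq\frac{1}{2}\prod_{i=1}^3p_i^{n_i}.$$ *)

(* Defs.v *)
From mathcomp Require Import all_boot all_algebra.

(* Main.v *)
Require Import Defs.
From mathcomp Require Import all_boot all_order all_algebra.
From mathcomp Require Import ring lra zify.
Import GRing.Theory Num.Theory.
Import Order.TTheory.
Local Open Scope ring_scope.

Lemma term (p a k : rat) : 2 <= k -> k <= p -> 0 <= a ->
  (p * a - p) / (p - 1) <= k / (k - 1) * a.
Proof.
move=> k2 kp a0.
have p1 : 0 < p - 1 by lra.
have k1 : 0 < k - 1 by lra.
rewrite ler_pdivrMr //.
set c := k / (k - 1).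
have ck : c * (k - 1) = k by rewrite /c mulfVK // gt_eqF.
have c1 : 1 <= c by rewrite /c ler_pdivlMr //; lra.
have h : 0 <= a * ((c - 1) * (p - k)) by apply: mulr_ge0 => //; apply: mulr_ge0; lra.
nra.
Qed.

Lemma sorted_case (p1 p2 p3 n1 n2 n3 : nat) :
  prime p1 -> prime p2 -> prime p3 ->
  (p1 < p2 < p3)%N ->
  (0 < n1)%N -> (0 < n2)%N -> (0 < n3)%N ->
  ((p1%:R ^+ n1.+1 - p1%:R) / (p1%:R - 1)
   + (p2%:R ^+ n2.+1 - p2%:R) / (p2%:R - 1)
   + (p3%:R ^+ n3.+1 - p3%:R) / (p3%:R - 1) : rat)
  <= 2^-1 * (p1%:R ^+ n1 * p2%:R ^+ n2 * p3%:R ^+ n3).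
Proof.
move=> P1 P2 P3 /andP[l12 l23] n1p n2p n3p.
have g1 := prime_gt1 P1.
have g3 : (5 <= p3)%N.
  have : p3 != 4%N by apply/eqP => e; rewrite e in P3.
  move=> /eqP; lia.
have g2 : (3 <= p2)%N by lia.
have ge (p n : nat) : (0 < n)%N -> (1 < p)%N -> (p%:R : rat) <= p%:R ^+ n.
  move=> n0 pp; rewrite -natrX ler_nat -{1}(expn1 p) leq_pexp2l //; lia.
have A1 := ge _ _ n1p g1; have A2 := ge p2 n2 n2p ltac:(lia);
have A3 := ge p3 n3 n3p ltac:(lia).
rewrite !exprS.
set a1 := p1%:R ^+ n1; set a2 := p2%:R ^+ n2; set a3 := p3%:R ^+ n3.
move: A1 A2 A3; rewrite -/a1 -/a2 -/a3 => A1 A2 A3.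
have q1 : (2 : rat) <= p1%:R by rewrite (ler_nat _ 2).
have q2 : (3 : rat) <= p2%:R by rewrite (ler_nat _ 3).
have q3 : (5 : rat) <= p3%:R by rewrite (ler_nat _ 5).
have b1 : 0 <= a1 by lra.
have b2 : 0 <= a2 by lra.
have b3 : 0 <= a3 by lra.
have T1 := term (p1%:R) a1 2 (lexx _) q1 b1.
have T2 := term (p2%:R) a2 3 ltac:(by []) q2 b2.
have T3 := term (p3%:R) a3 5 ltac:(by []) q3 b3.
have e1 : (2 : rat) / (2 - 1) = 2 by [].
have e2 : (3 : rat) / (3 - 1) = 3/2 by [].
have e3 : (5 : rat) / (5 - 1) = 5/4 by [].
rewrite e1 in T1; rewrite e2 in T2; rewrite e3 in T3.
have x1 : 0 <= a1 - 2 by lra.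
have x2 : 0 <= a2 - 3 by lra.
have x3 : 0 <= a3 - 5 by lra.
have h12 := mulr_ge0 x1 x2. have h13 := mulr_ge0 x1 x3. have h23 := mulr_ge0 x2 x3.
have h123 := mulr_ge0 h12 x3.
nra.
Qed.

Theorem lemma2p3 (p1 p2 p3 n1 n2 n3 : nat) :
  prime p1 -> prime p2 -> prime p3 ->
  p1 != p2 -> p1 != p3 -> p2 != p3 ->
  (0 < n1)%N -> (0 < n2)%N -> (0 < n3)%N ->
  ((p1%:R ^+ n1.+1 - p1%:R) / (p1%:R - 1)
   + (p2%:R ^+ n2.+1 - p2%:R) / (p2%:R - 1)
   + (p3%:R ^+ n3.+1 - p3%:R) / (p3%:R - 1) : rat)
  <= 2^-1 * (p1%:R ^+ n1 * p2%:R ^+ n2 * p3%:R ^+ n3).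
Proof.
move=> P1 P2 P3 d12 d13 d23 n1p n2p n3p.
case: (ltngtP p1 p2) => [a|a|a]; last by rewrite a eqxx in d12.
- case: (ltngtP p1 p3) => [b|b|b]; last by rewrite b eqxx in d13.
  + case: (ltngtP p2 p3) => [c|c|c]; last by rewrite c eqxx in d23.
    * have := sorted_case _ _ _ _ _ _ P1 P2 P3 ltac:(lia) n1p n2p n3p; lra.
    * have := sorted_case _ _ _ _ _ _ P1 P3 P2 ltac:(lia) n1p n3p n2p; lra.
  + have := sorted_case _ _ _ _ _ _ P3 P1 P2 ltac:(lia) n3p n1p n2p; lra.
- case: (ltngtP p1 p3) => [b|b|b]; last by rewrite b eqxx in d13.
  + have := sorted_case _ _ _ _ _ _ P2 P1 P3 ltac:(lia) n2p n1p n3p; lra.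
  + case: (ltngtP p2 p3) => [c|c|c]; last by rewrite c eqxx in d23.
    * have := sorted_case _ _ _ _ _ _ P2 P3 P1 ltac:(lia) n2p n3p n1p; lra.
    * have := sorted_case _ _ _ _ _ _ P3 P2 P1 ltac:(lia) n3p n2p n1p; lra.
Qed.
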